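(* For $m,n\in\mathbb N$ and $k=\min\{m,n\}$, the expected value of $\|G\|$ for a random bipartite graph $G\in\mathcal G(m,n,1/2)$ satisfies \[\mathbb E_{m,n,1/2}(\|G\|)\ge\frac18\sqrt{\frac k2}-1.\]
   Context: $\mathcal G(m,n,p)$ is the probability space of bipartite graphs $G\subseteq\{r_1,\dots,r_m\}\times\{c_1,\dots,c_n\}$ in which each of the $mn$ possible edges is present independently with probability $p$. The biadjacency matrix $M(G)$ is the $m\times n$ $0$–$1$ matrix with $(i,j)$ entry $1$ iff $(r_i,c_j)$ is an edge, and $\|G\|=\|M(G)\|_\bullet=\sup\{\|M(G)\bullet X\|:X\in M_{m,n}(\mathbb F),\|X\|\le1\}$ is the Schur norm (entrywise product, operator norm $\ell^2_n\to\ell^2_m$, $\mathbb F\in\{\mathbb R,\mathbb C\}$). *)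

(* Defs.v *)
From HB Require Import structures.
From mathcomp Require Import all_boot all_order all_algebra.
From mathcomp Require Import classical_sets reals.
From mathcomp.real_closed Require Import complex.
Set Implicit Arguments. Unset Strict Implicit. Unset Printing Implicit Defensive.
Import Order.TTheory GRing.Theory Num.Theory.
Local Open Scope ring_scope.
Local Open Scope classical_set_scope.

(* Operator norm l^2_n -> l^2_m of a matrix over a scalar field F, where
   [abs2 : F -> R] is the squared modulus |.|^2 of F (valued in the reals R). *)
Definition opnorm (R : realType) (F : nzRingType) (abs2 : F -> R) (m n : nat)
    (A : 'M[F]_(m, n)) : R :=
  sup [set Num.sqrt (\sum_(i < m) abs2 ((A *m x) i 0)) |
        x in [set x : 'cV[F]_n | \sum_(j < n) abs2 (x j 0) <= 1]].

Definition schur_mul (F : nzRingType) (m n : nat) (M : 'M[bool]_(m, n))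
    (X : 'M[F]_(m, n)) : 'M[F]_(m, n) :=
  \matrix_(i < m, j < n) ((M i j)%:R * X i j).

Definition schur_norm (R : realType) (F : nzRingType) (abs2 : F -> R)
    (m n : nat) (M : 'M[bool]_(m, n)) : R :=
  sup [set opnorm abs2 (schur_mul M X) |
        X in [set X : 'M[F]_(m, n) | opnorm abs2 X <= 1]].

Definition abs2R (R : realType) (x : R) : R := x ^+ 2.
Definition abs2C (R : realType) (z : R[i]) : R := complex.Re z ^+ 2 + complex.Im z ^+ 2.

Definition schur_normR (R : realType) (m n : nat) (M : 'M[bool]_(m, n)) : R :=
  schur_norm (@abs2R R) M.
Definition schur_normC (R : realType) (m n : nat) (M : 'M[bool]_(m, n)) : R :=
  schur_norm (@abs2C R) M.

(* Expectation over G(m,n,1/2): every one of the 2^(mn) biadjacency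
   matrices has probability 2^-(mn). *)
Definition expect_half (R : realType) (m n : nat) (f : 'M[bool]_(m, n) -> R) : R :=
  (\sum_(M : 'M[bool]_(m, n)) f M) / (2 ^ (m * n))%:R.

(* Main.v *)
Require Import Defs.
From HB Require Import structures.
From mathcomp Require Import all_boot all_order all_algebra.
From mathcomp Require Import classical_sets reals.
From mathcomp.real_closed Require Import complex.
From mathcomp Require Import ring lra zify.
Import Order.TTheory GRing.Theory Num.Theory.
Local Open Scope ring_scope.
Set Implicit Arguments. Unset Strict Implicit. Unset Printing Implicit Defensive.

Definition nrm2 (R : realType) p (v : 'cV[R]_p) : R := \sum_i v i 0 ^+ 2.
Definition dotc (R : realType) p (u v : 'cV[R]_p) : R := \sum_i u i 0 * v i 0.

Lemma dotcC (R : realType) p (u v : 'cV[R]_p) : dotc u v = dotc v u.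
Proof. by apply: eq_bigr => i _; rewrite mulrC. Qed.

Lemma dotcc (R : realType) p (u : 'cV[R]_p) : dotc u u = nrm2 u.
Proof. by apply: eq_bigr => i _; rewrite expr2. Qed.

Lemma nrm2_ge0 (R : realType) p (u : 'cV[R]_p) : 0 <= nrm2 u.
Proof. by apply: sumr_ge0 => i _; rewrite sqr_ge0. Qed.

Lemma dotc_mul (R : realType) p q (A : 'M[R]_(p, q)) u w :
  dotc u (A *m w) = dotc (A^T *m u) w.
Proof.
rewrite /dotc.
under eq_bigr do rewrite mxE big_distrr.
rewrite exchange_big /=; apply: eq_bigr => j _.
rewrite mxE big_distrl /=; apply: eq_bigr => i _.
by rewrite mxE; ring.
Qed.

Lemma dotcD (R : realType) p (u v w : 'cV[R]_p) : dotc u (v + w) = dotc u v + dotc u w.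
Proof. by rewrite /dotc -big_split; apply: eq_bigr => i _; rewrite mxE mulrDr. Qed.

Lemma dotcZ (R : realType) p (u v : 'cV[R]_p) a : dotc u (a *: v) = a * dotc u v.
Proof. rewrite /dotc big_distrr; apply: eq_bigr => i _; by rewrite mxE /= mulrCA. Qed.

Lemma dotc_le (R : realType) p (u v : 'cV[R]_p) : dotc u v <= nrm2 u + nrm2 v / 4.
Proof.
rewrite /dotc /nrm2 big_distrl -big_split /=; apply: ler_sum => i _.
have := sqr_ge0 (u i 0 - v i 0 / 2). nra.
Qed.

Lemma quadB (R : realType) m n (A : 'M[R]_(m, n)) lam (w : 'cV[R]_m) :
  dotc w ((A *m A^T + lam%:M) *m w) = nrm2 (A^T *m w) + lam * nrm2 w.
Proof.
rewrite mulmxDl -mulmxA dotcD dotc_mul dotcc mul_scalar_mx dotcZ dotcc.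
done.
Qed.

Lemma dotc0r (R : realType) p (u : 'cV[R]_p) : dotc u 0 = 0.
Proof. by rewrite /dotc big1 // => i _; rewrite mxE mulr0. Qed.

Lemma nrm2_eq0 (R : realType) p (u : 'cV[R]_p) : nrm2 u = 0 -> u = 0.
Proof.
move=> h; apply/matrixP => i j; rewrite (ord1 j) mxE.
have := psumr_eq0P (fun k _ => sqr_ge0 (u k 0)) h (i:=i) isT.
by move/eqP; rewrite sqrf_eq0 => /eqP.
Qed.

Lemma S_sym (R : realType) m n (A : 'M[R]_(m, n)) lam :
  (A *m A^T + lam%:M)^T = A *m A^T + lam%:M.
Proof. by rewrite raddfD /= trmx_mul trmxK tr_scalar_mx. Qed.

Lemma S_unit (R : realType) m n (A : 'M[R]_(m, n)) lam : 0 < lam ->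
  (A *m A^T + lam%:M) \in unitmx.
Proof.
move=> lam0; rewrite unitmxE unitfE; apply/negP => /det0P [v vnz hv].
have hw : (A *m A^T + lam%:M) *m v^T = 0.
  by rewrite -{1}S_sym -trmx_mul hv trmx0.
have := quadB A lam v^T; rewrite hw dotc0r => h.
have h1 := nrm2_ge0 (A^T *m v^T); have h2 := nrm2_ge0 v^T.
have : nrm2 v^T = 0 by nra.
move/nrm2_eq0 => /(congr1 trmx); rewrite trmxK trmx0 => v0.
by move: vnz; rewrite v0 eqxx.
Qed.

Lemma resolvent_bound (R : realType) m n (A : 'M[R]_(m, n)) lam (x : 'cV[R]_n) :
  0 < lam -> 4 * lam * nrm2 (invmx (A *m A^T + lam%:M) *m (A *m x)) <= nrm2 x.
Proof.
move=> lam0; set S := A *m A^T + lam%:M; set y := invmx S *m (A *m x).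
have hy : S *m y = A *m x by rewrite /y mulmxA mulmxV ?mul1mx // S_unit.
have := quadB A lam y; rewrite -/S hy dotc_mul => h.
have := dotc_le (A^T *m y) x.
have := nrm2_ge0 (A^T *m y). nra.
Qed.

Lemma resolvent_psd (R : realType) m n (A : 'M[R]_(m, n)) lam (z : 'cV[R]_m) :
  0 < lam -> 0 <= dotc z (invmx (A *m A^T + lam%:M) *m z).
Proof.
move=> lam0; set S := A *m A^T + lam%:M; set w := invmx S *m z.
have hw : S *m w = z by rewrite /w mulmxA mulmxV ?mul1mx // S_unit.
have -> : dotc z w = dotc (S *m w) w by rewrite hw.
rewrite dotcC quadB.
have := nrm2_ge0 (A^T *m w); have := nrm2_ge0 w. nra.
Qed.

Lemma tr_quad (R : realType) m n (Z : 'M[R]_(m, n)) (P : 'M[R]_m) :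
  \tr (Z^T *m (P *m Z)) = \sum_j dotc (col j Z) (P *m col j Z).
Proof.
rewrite /mxtrace; apply: eq_bigr => j _.
rewrite /dotc mxE; apply: eq_bigr => i _.
rewrite !mxE; congr (_ * _); apply: eq_bigr => k _; by rewrite !mxE.
Qed.

Lemma tr_resolvent (R : realType) m n (A : 'M[R]_(m, n)) lam B : 0 < lam ->
  B = A *m A^T ->
  \tr B / lam - \tr (B *m B) / lam ^+ 2 <= \tr (invmx (B + lam%:M) *m B).
Proof.
move=> lam0 hB; set S := B + lam%:M; set Rm := invmx S.
have Su : S \in unitmx by rewrite /S hB S_unit.
have h1 : S *m Rm = 1%:M by rewrite mulmxV.
have h2 : Rm *m S = 1%:M by rewrite mulVmx.
have e1 : B *m Rm = 1%:M - lam *: Rm.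
  by rewrite -h1 /S mulmxDl mul_scalar_mx addrK.
have e2 : Rm *m B = 1%:M - lam *: Rm.
  by rewrite -h2 /S mulmxDr mul_mx_scalar addrK.
have E1 : lam *: (B *m Rm) = B - B *m (B *m Rm).
  have eR : lam *: Rm = 1%:M - B *m Rm by rewrite e1 opprB addrC subrK.
  by rewrite scalemxAr eR mulmxBr mulmx1.
have E2 : lam *: (B *m (B *m Rm)) = B *m B - B *m (B *m (B *m Rm)).
  by rewrite scalemxAr E1 mulmxBr.
have T1 := congr1 mxtrace E1; have T2 := congr1 mxtrace E2.
rewrite mxtraceZ raddfB /= in T1.
rewrite mxtraceZ raddfB /= in T2.
have hc : B *m Rm = Rm *m B by rewrite e1 e2.
have Bt : B^T = B by rewrite hB trmx_mul trmxK.
have pos : 0 <= \tr (B *m (B *m (B *m Rm))).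
  have -> : \tr (B *m (B *m (B *m Rm))) = \tr ((B *m A)^T *m (Rm *m (B *m A))).
    have -> : B *m (B *m (B *m Rm)) = B *m (B *m Rm *m B) by rewrite -!mulmxA hc.
    rewrite mxtrace_mulC trmx_mul Bt.
    have -> : A^T *m B *m (Rm *m (B *m A)) = A^T *m (B *m Rm *m B *m A) by rewrite !mulmxA.
    rewrite [RHS]mxtrace_mulC -(mulmxA _ A) -hB.
    by [].
  rewrite tr_quad; apply: sumr_ge0 => j _.
  by have := resolvent_psd A (col j (B *m A)) lam0; rewrite -hB.
have ? : 0 < lam ^+ 2 by rewrite exprn_gt0.
rewrite mxtrace_mulC.
have -> : \tr B / lam - \tr (B *m B) / lam ^+ 2 = 
   (lam * \tr B - \tr (B *m B)) / lam ^+ 2 by field; rewrite gt_eqF.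
rewrite ler_pdivrMr // -hc.
have -> : \tr (B *m Rm) * lam ^+ 2 = lam * (lam * \tr (B *m Rm)) by rewrite expr2; ring.
rewrite T1 mulrBr T2; lra.
Qed.

Lemma sum_sq_le (R : realType) p (a : 'I_p -> R) :
  (\sum_i a i) ^+ 2 <= p%:R * \sum_i a i ^+ 2.
Proof.
have h0 : 0 <= \sum_i \sum_j (a i - a j) ^+ 2.
  by apply: sumr_ge0 => i _; apply: sumr_ge0 => j _; rewrite sqr_ge0.
have e : \sum_i \sum_j (a i - a j) ^+ 2 =
   \sum_(i < p) \sum_(j < p) a i ^+ 2 + \sum_(i < p) \sum_(j < p) a j ^+ 2
     - 2 * (\sum_(i < p) \sum_(j < p) a i * a j).
  rewrite mulr_sumr -big_split -sumrB /=; apply: eq_bigr => i _.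
  rewrite mulr_sumr -big_split -sumrB /=; apply: eq_bigr => j _. ring.
have e1 : \sum_i \sum_j a i * a j = (\sum_i a i) ^+ 2.
  by rewrite expr2 mulr_suml; apply: eq_bigr => i _; rewrite mulr_sumr.
have e2 : \sum_(i < p) \sum_(j < p) a i ^+ 2 = p%:R * \sum_i a i ^+ 2.
  rewrite mulr_sumr; apply: eq_bigr => i _.
  by rewrite sumr_const card_ord mulr_natl.
have e3 : \sum_(i < p) \sum_(j < p) a j ^+ 2 = p%:R * \sum_i a i ^+ 2.
  rewrite exchange_big /=; exact: e2.
rewrite e e1 e2 e3 in h0. lra.
Qed.

Lemma cs_sum (R : realType) p (a : 'cV[R]_p) :
  `|\sum_i a i 0| <= Num.sqrt p%:R * Num.sqrt (nrm2 a).
Proof.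
rewrite -sqrtrM // -sqrtr_sqr ler_wsqrtr //; exact: sum_sq_le.
Qed.

Lemma nrm2Z (R : realType) p (v : 'cV[R]_p) c : nrm2 (c *: v) = c ^+ 2 * nrm2 v.
Proof. by rewrite /nrm2 mulr_sumr; apply: eq_bigr => i _; rewrite mxE exprMn. Qed.

Lemma nrm2_const (R : realType) p (c : R) : nrm2 (const_mx c : 'cV[R]_p) = p%:R * c ^+ 2.
Proof.
rewrite /nrm2 (eq_bigr (fun _ => c ^+ 2)) ?sumr_const ?card_ord ?mulr_natl //.
by move=> i _; rewrite mxE.
Qed.

Lemma sum_mul_const (R : realType) m n (Y : 'M[R]_(m, n)) c :
  \sum_i (Y *m (const_mx c : 'cV[R]_n)) i 0 = c * \sum_i \sum_j Y i j.
Proof.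
rewrite mulr_sumr; apply: eq_bigr => i _; rewrite mxE mulr_sumr.
by apply: eq_bigr => j _; rewrite mxE mulrC.
Qed.

Lemma tr_dot (R : realType) m n (A Z : 'M[R]_(m, n)) :
  \tr (A^T *m Z) = \sum_i \sum_j A i j * Z i j.
Proof.
rewrite /mxtrace exchange_big /=; apply: eq_bigr => j _.
by rewrite mxE; apply: eq_bigr => i _; rewrite mxE.
Qed.

Definition Amat (R : realType) m n (M : 'M[bool]_(m, n)) : 'M[R]_(m, n) :=
  \matrix_(i, j) (if M i j then 1 else -1).

Definition TT (R : realType) m n (M : 'M[bool]_(m, n)) : R :=
  \tr ((Amat R M *m (Amat R M)^T) *m (Amat R M *m (Amat R M)^T)).

Lemma Amat_sq (R : realType) m n (M : 'M[bool]_(m, n)) i j :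
  Amat R M i j * Amat R M i j = 1.
Proof. by rewrite mxE; case: (M i j); rewrite ?mulr1 ?mulrNN ?mulr1. Qed.

Lemma Mnat (R : realType) m n (M : 'M[bool]_(m, n)) i j :
  (M i j)%:R = (Amat R M i j + 1) / 2 :> R.
Proof. by rewrite mxE; case: (M i j) => /=; field. Qed.

Lemma trB (R : realType) m n (M : 'M[bool]_(m, n)) :
  \tr (Amat R M *m (Amat R M)^T) = (m * n)%:R.
Proof.
rewrite mxtrace_mulC tr_dot.
rewrite (eq_bigr (fun _ => n%:R)) ?sumr_const ?card_ord ?natrM ?mulr_natl //.
move=> i _; rewrite (eq_bigr (fun _ => 1)) ?sumr_const ?card_ord //.
by move=> j _; rewrite Amat_sq.
Qed.

Lemma real_main (R : realType) m n (M : 'M[bool]_(m, n)) (t mu : R) :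
  (0 < m)%N -> (0 < n)%N ->
  t = Num.sqrt (m + n)%:R -> mu = Num.sqrt m%:R * Num.sqrt n%:R ->
  exists X' : 'M[R]_(m, n), exists u : 'cV[R]_n,
   [/\ (forall v, nrm2 (X' *m v) <= nrm2 v), nrm2 u <= 1 &
    mu / (2 * t) - TT R M / (8 * t ^+ 3 * mu) - 1 / 2 <=
      Num.sqrt (nrm2 (schur_mul M X' *m u))].
Proof.
move=> hm hn ht hmu.
have t0 : 0 < t by rewrite ht sqrtr_gt0 ltr0n addn_gt0 hm.
have t2 : t ^+ 2 = (m + n)%:R by rewrite ht sqr_sqrtr.
have sm0 : 0 < Num.sqrt (m%:R : R) by rewrite sqrtr_gt0 ltr0n.
have sn0 : 0 < Num.sqrt (n%:R : R) by rewrite sqrtr_gt0 ltr0n.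
have sm2 : Num.sqrt m%:R ^+ 2 = m%:R :> R by rewrite sqr_sqrtr.
have sn2 : Num.sqrt n%:R ^+ 2 = n%:R :> R by rewrite sqr_sqrtr.
have mu0 : 0 < mu by rewrite hmu mulr_gt0.
have mu2 : mu ^+ 2 = (m * n)%:R by rewrite hmu exprMn sm2 sn2 natrM.
set A := Amat R M; set B := A *m A^T; set lam := 4 * t ^+ 2.
have lam0 : 0 < lam by rewrite /lam mulr_gt0 // exprn_gt0.
set Rm := invmx (B + lam%:M).
set X' := (4 * t) *: (Rm *m A).
set u : 'cV[R]_n := const_mx (Num.sqrt n%:R)^-1.
have hX : forall v, nrm2 (X' *m v) <= nrm2 v.
  move=> v; rewrite /X' -scalemxAl -mulmxA nrm2Z.
  have := resolvent_bound A v lam0; rewrite -/B -/Rm.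
  have -> : (4 * t) ^+ 2 = 4 * lam by rewrite /lam; ring.
  by [].
exists X', u; split => //.
  rewrite /u nrm2_const exprVn sn2 mulfV //; by rewrite pnatr_eq0 -lt0n.
set Y := schur_mul M X'.
set N := Num.sqrt (nrm2 (Y *m u)).
set sY := \sum_i \sum_j Y i j.
have hsY : sY <= mu * N.
  have := cs_sum (Y *m u); rewrite /u sum_mul_const -/sY -/N.
  rewrite normrM gtr0_norm ?invr_gt0 // => h.
  have h2 := ler_norm sY.
  have h3 : `|sY| <= Num.sqrt n%:R * (Num.sqrt m%:R * N).
    have -> : `|sY| = Num.sqrt n%:R * ((Num.sqrt n%:R)^-1 * `|sY|).
      by rewrite mulrA mulfV ?mul1r // gt_eqF.
    by rewrite ler_pM2l.
  apply: le_trans h2 _; apply: le_trans h3 _.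
  by rewrite hmu mulrA [Num.sqrt n%:R * _]mulrC.
have hY : sY = (\sum_i \sum_j A i j * X' i j + \sum_i \sum_j X' i j) / 2.
  rewrite -big_split mulr_suml; apply: eq_bigr => i _.
  rewrite -big_split mulr_suml; apply: eq_bigr => j _.
  rewrite /Y mxE Mnat -/A /=; ring.
have hAX : \sum_i \sum_j A i j * X' i j = 4 * t * \tr (Rm *m B).
  by rewrite -tr_dot /X' -scalemxAr mxtraceZ mxtrace_mulC -mulmxA.
have hX1 : - mu <= \sum_i \sum_j X' i j.
  have := cs_sum (X' *m const_mx 1); rewrite sum_mul_const mul1r => h.
  have h2 : Num.sqrt (nrm2 (X' *m const_mx 1)) <= Num.sqrt n%:R.
    apply: ler_wsqrtr; apply: le_trans (hX _) _; by rewrite nrm2_const expr1n mulr1.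
  have : `|\sum_i \sum_j X' i j| <= mu.
    by apply: le_trans h _; rewrite hmu ler_pM2l.
  by rewrite ler_norml => /andP[].
have hG := tr_resolvent lam0 (erefl B); rewrite -/Rm trB in hG.
have hT : \tr (B *m B) = TT R M by [].
rewrite hT -mu2 in hG.
have key : 4 * t * (mu ^+ 2 / lam - TT R M / lam ^+ 2) - mu <= 2 * mu * N.
  have : 4 * t * (mu ^+ 2 / lam - TT R M / lam ^+ 2) <= 4 * t * \tr (Rm *m B).
    by rewrite ler_pM2l // mulr_gt0.
  lra.
have -> : mu / (2 * t) - TT R M / (8 * t ^+ 3 * mu) - 1 / 2 =
    (4 * t * (mu ^+ 2 / lam - TT R M / lam ^+ 2) - mu) / (2 * mu).
  rewrite /lam; field.
  by rewrite gt_eqF // gt_eqF.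
rewrite ler_pdivrMr ?mulr_gt0 //; lra.
Qed.

Local Open Scope classical_set_scope.

Section Fside.
Context (R : realType) (F : nzRingType) (abs2 : F -> R) (iota : {rmorphism R -> F}).
Hypothesis h0 : forall x, 0 <= abs2 x.
Hypothesis hi : forall r, abs2 (iota r) = r ^+ 2.
Hypothesis hadd : forall a b, abs2 (a + b) <= 2 * abs2 a + 2 * abs2 b.
Hypothesis hmul : forall a b, abs2 (a * b) = abs2 a * abs2 b.

Lemma abs2_0 : abs2 0 = 0.
Proof. by rewrite -(rmorph0 iota) hi expr0n. Qed.

Lemma abs2_1 : abs2 1 = 1.
Proof. by rewrite -(rmorph1 iota) hi expr1n. Qed.

Lemma sum_bound p (f : 'I_p -> F) :
  abs2 (\sum_j f j) <= (2 ^ p)%:R * \sum_j abs2 (f j).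
Proof.
elim: p f => [|p IH] f; first by rewrite !big_ord0 abs2_0 mulr0.
rewrite !big_ord_recl; apply: le_trans (hadd _ _) _.
have := IH (fun i => f (lift ord0 i)).
have p2 : (2 : R) <= (2 ^ p.+1)%:R.
  by rewrite ler_nat expnS leq_pmulr // expn_gt0.
have e : (2 ^ p.+1)%:R = 2 * (2 ^ p)%:R :> R by rewrite expnS natrM.
have := h0 (f ord0).
have : 0 <= \sum_(i < p) abs2 (f (lift ord0 i)) by apply: sumr_ge0.
rewrite e; nra.
Qed.

Lemma entry_le_sum n (x : 'cV[F]_n) j : abs2 (x j 0) <= \sum_k abs2 (x k 0).
Proof. by rewrite (bigD1 j) //= lerDl sumr_ge0. Qed.

Lemma op_bound m n (Y : 'M[F]_(m, n)) (x : 'cV[F]_n) :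
  \sum_j abs2 (x j 0) <= 1 ->
  \sum_i abs2 ((Y *m x) i 0) <= (2 ^ n)%:R * \sum_i \sum_j abs2 (Y i j).
Proof.
move=> hx; rewrite mulr_sumr; apply: ler_sum => i _; rewrite mxE.
apply: le_trans (sum_bound _) _; rewrite ler_pM2l ?ltr0n ?expn_gt0 //.
apply: ler_sum => j _; rewrite hmul.
have := le_trans (entry_le_sum x j) hx; have := h0 (Y i j); have := h0 (x j 0).
nra.
Qed.

Definition opset m n (Y : 'M[F]_(m, n)) :=
  [set Num.sqrt (\sum_(i < m) abs2 ((Y *m x) i 0)) |
        x in [set x : 'cV[F]_n | \sum_(j < n) abs2 (x j 0) <= 1]].

Lemma opnormE m n (Y : 'M[F]_(m, n)) : opnorm abs2 Y = sup (opset Y).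
Proof. by []. Qed.

Lemma opset_ub m n (Y : 'M[F]_(m, n)) : has_ubound (opset Y).
Proof.
exists (Num.sqrt ((2 ^ n)%:R * \sum_i \sum_j abs2 (Y i j))).
move=> y [x hx <-]; apply: ler_wsqrtr; exact: op_bound.
Qed.

Lemma opset_n0 m n (Y : 'M[F]_(m, n)) : opset Y !=set0.
Proof.
exists (Num.sqrt (\sum_(i < m) abs2 ((Y *m (0 : 'cV[F]_n)) i 0))); exists 0 => //.
by rewrite /= big1 // => j _; rewrite mxE abs2_0.
Qed.

Lemma opnorm_ge m n (Y : 'M[F]_(m, n)) (x : 'cV[F]_n) : \sum_j abs2 (x j 0) <= 1 ->
  Num.sqrt (\sum_i abs2 ((Y *m x) i 0)) <= opnorm abs2 Y.
Proof. by move=> hx; apply: ub_le_sup; [exact: opset_ub | exists x]. Qed.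

Lemma entry_le1 m n (X : 'M[F]_(m, n)) i j : opnorm abs2 X <= 1 -> abs2 (X i j) <= 1.
Proof.
move=> hX.
have hd : \sum_k abs2 ((delta_mx j 0 : 'cV[F]_n) k 0) <= 1.
  rewrite (bigD1 j) //= big1 ?addr0 => [|k hk]; first by rewrite mxE !eqxx abs2_1.
  by rewrite mxE (negbTE hk) abs2_0.
have h1 := opnorm_ge X hd.
have hs : Num.sqrt (\sum_i abs2 ((X *m (delta_mx j 0 : 'cV[F]_n)) i 0)) <= Num.sqrt (1 : R).
  rewrite sqrtr1; lra.
rewrite ler_sqrt // in hs; apply: le_trans _ hs.
apply: le_trans (entry_le_sum (X *m (delta_mx j 0 : 'cV[F]_n)) i).
rewrite mxE (bigD1 j) //= big1 ?addr0 => [|k hk]; last by rewrite mxE (negbTE hk) mulr0.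
by rewrite mxE !eqxx mulr1.
Qed.

Definition schurset m n (M : 'M[bool]_(m, n)) :=
  [set opnorm abs2 (schur_mul M X) |
        X in [set X : 'M[F]_(m, n) | opnorm abs2 X <= 1]].

Lemma schurset_ub m n (M : 'M[bool]_(m, n)) : has_ubound (schurset M).
Proof.
exists (Num.sqrt ((2 ^ n)%:R * (m * n)%:R)).
move=> y [X hX <-]; apply: ge_sup; first exact: opset_n0.
move=> z [x hx <-]; apply: ler_wsqrtr.
apply: le_trans (op_bound _ hx) _; rewrite ler_pM2l ?ltr0n ?expn_gt0 //.
apply: (@le_trans _ _ (\sum_(i < m) \sum_(j < n) (1 : R))); last first.
  rewrite (eq_bigr (fun _ => n%:R)); last by move=> i _; rewrite sumr_const card_ord.
  rewrite sumr_const card_ord.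
  by rewrite natrM mulrC mulr_natr.
apply: ler_sum => i _; apply: ler_sum => j _.
rewrite mxE hmul.
have e : abs2 ((M i j)%:R) <= 1.
  by case: (M i j) => /=; rewrite ?mulr1n ?mulr0n ?abs2_1 ?abs2_0 ?ler01 ?lexx.
have := entry_le1 i j hX; have := h0 (X i j); have := h0 ((M i j)%:R). nra.
Qed.
Lemma F_lower
  (htr : forall p q (X : 'M[R]_(p, q)), (forall v, nrm2 (X *m v) <= nrm2 v) ->
     forall z : 'cV[F]_q, \sum_i abs2 ((map_mx iota X *m z) i 0) <= \sum_j abs2 (z j 0))
  m n (M : 'M[bool]_(m, n)) (X : 'M[R]_(m, n)) (u : 'cV[R]_n) :
  (forall v, nrm2 (X *m v) <= nrm2 v) -> nrm2 u <= 1 ->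
  Num.sqrt (nrm2 (schur_mul M X *m u)) <= schur_norm abs2 M.
Proof.
move=> hX hu.
have hXF : opnorm abs2 (map_mx iota X) <= 1.
  apply: ge_sup; first exact: opset_n0.
  move=> y [z hz <-].
  have := htr _ _ _ hX z => h.
  have : Num.sqrt (\sum_i abs2 ((map_mx iota X *m z) i 0)) <= Num.sqrt (1 : R).
    by apply: ler_wsqrtr; apply: le_trans h _; exact: hz.
  by rewrite sqrtr1.
have e : schur_mul M (map_mx iota X) = map_mx iota (schur_mul M X).
  by apply/matrixP => i j; rewrite !mxE rmorphM /= rmorph_nat.
have h1 : opnorm abs2 (schur_mul M (map_mx iota X)) <= schur_norm abs2 M.
  apply: ub_le_sup; first exact: schurset_ub.
  by exists (map_mx iota X).
have hu' : \sum_j abs2 ((map_mx iota u) j 0) <= 1.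
  by rewrite (eq_bigr (fun j => u j 0 ^+ 2)) // => j _; rewrite mxE hi.
have h2 := opnorm_ge (map_mx iota (schur_mul M X)) hu'.
rewrite -map_mxM in h2.
rewrite (eq_bigr (fun i => (schur_mul M X *m u) i 0 ^+ 2)) in h2; last first.
  by move=> i _; rewrite mxE hi.
rewrite e in h1.
rewrite /nrm2; lra.
Qed.
End Fside.

Local Close Scope classical_set_scope.

Lemma TT_expand (R : realType) m n (M : 'M[bool]_(m, n)) :
  TT R M = \sum_i \sum_l \sum_j \sum_p
    (Amat R M i j * Amat R M l j * (Amat R M l p * Amat R M i p)).
Proof.
rewrite /TT /mxtrace; apply: eq_bigr => i _; rewrite mxE; apply: eq_bigr => l _.
rewrite !mxE big_distrl /=; apply: eq_bigr => j _; rewrite big_distrr /=.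
by apply: eq_bigr => p _; rewrite !mxE.
Qed.

Definition flip m n (i : 'I_m) (j : 'I_n) (M : 'M[bool]_(m, n)) : 'M[bool]_(m, n) :=
  \matrix_(a, b) (if (a == i) && (b == j) then ~~ M a b else M a b).

Lemma flipK m n i j : involutive (@flip m n i j).
Proof.
move=> M; apply/matrixP => a b; rewrite !mxE.
by case: ((a == i) && (b == j)); rewrite ?negbK.
Qed.

Lemma sum_flip (R : realType) m n (i l : 'I_m) (j p : 'I_n) :
  i != l -> j != p ->
  \sum_(M : 'M[bool]_(m, n))
    (Amat R M i j * Amat R M l j * (Amat R M l p * Amat R M i p)) = 0.
Proof.
move=> hil hjp.
set S := (X in X = 0).
have : S = - S.
  rewrite {1}/S (reindex_inj (can_inj (flipK i j))) /S -sumrN.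
  apply: eq_bigr => M _.
  have hl : (l == i) = false by rewrite eq_sym (negbTE hil).
  have hp : (p == j) = false by rewrite eq_sym (negbTE hjp).
  rewrite /Amat !mxE !eqxx hl hp /=.
  by case: (M i j); case: (M l j); case: (M l p); case: (M i p) => /=; ring.
lra.
Qed.

Lemma sum_delta (R : realType) n (j : 'I_n) : \sum_(p < n) ((j == p)%:R : R) = 1.
Proof.
rewrite (bigD1 j) //= eqxx big1 ?addr0 // => p hp.
by rewrite eq_sym (negbTE hp).
Qed.

Lemma sum_term (R : realType) m n (i l : 'I_m) (j p : 'I_n) :
  \sum_(M : 'M[bool]_(m, n))
    (Amat R M i j * Amat R M l j * (Amat R M l p * Amat R M i p))
  <= (2 ^ (m * n))%:R * ((i == l)%:R + (j == p)%:R).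
Proof.
have hN : \sum_(M : 'M[bool]_(m, n)) (1 : R) = (2 ^ (m * n))%:R.
  by rewrite sumr_const card_mx card_bool.
have hN0 : 0 <= (2 ^ (m * n))%:R :> R by [].
case: (eqVneq i l) => [<-|hil].
  rewrite (eq_bigr (fun _ => 1)); last first.
    by move=> M _; rewrite -mulrA Amat_sq mulrA Amat_sq mulr1.
  rewrite hN /=; have : (0 : R) <= (j == p)%:R by []. nra.
case: (eqVneq j p) => [<-|hjp].
  rewrite (eq_bigr (fun _ => 1)); last first.
    by move=> M _; rewrite -mulrA [X in _ * X]mulrA Amat_sq mul1r Amat_sq.
  rewrite hN /= ?eqxx; have : (0 : R) <= (i == l)%:R by []. nra.
by rewrite sum_flip // mulr_ge0 // addr_ge0.
Qed.

Lemma sum_e1 (R : realType) n (N c : R) :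
  \sum_(j < n) \sum_(p < n) N * (c + (j == p)%:R) = N * (c * (n * n)%:R + n%:R).
Proof.
rewrite (eq_bigr (fun j => N * (c * n%:R + 1))); last first.
  move=> j _; rewrite -mulr_sumr big_split /= sum_delta sumr_const card_ord.
  by rewrite mulr_natr.
rewrite sumr_const card_ord -[X in X = _]mulr_natr natrM.
ring.
Qed.
Lemma sum_e2 (R : realType) m (N a b : R) (i : 'I_m) :
  \sum_(l < m) N * ((i == l)%:R * a + b) = N * (a + b *+ m).
Proof.
rewrite -mulr_sumr big_split /= -mulr_suml sum_delta mul1r.
by rewrite sumr_const card_ord.
Qed.

Lemma sum_TT (R : realType) m n :
  \sum_(M : 'M[bool]_(m, n)) TT R M <= (2 ^ (m * n))%:R * (m * n * (m + n))%:R.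
Proof.
set N := (2 ^ (m * n))%:R : R.
under eq_bigr do rewrite TT_expand.
apply: (@le_trans _ _ (\sum_(i < m) \sum_(l < m) \sum_(j < n) \sum_(p < n)
           N * ((i == l)%:R + (j == p)%:R))).
  rewrite exchange_big; apply: ler_sum => i _.
  rewrite exchange_big; apply: ler_sum => l _.
  rewrite exchange_big; apply: ler_sum => j _.
  rewrite exchange_big; apply: ler_sum => p _.
  exact: sum_term.
set L := (X in X <= _).
suff E : L = N * (m * n * (m + n))%:R by rewrite E; exact: le_refl.
rewrite /L.
under eq_bigr do under eq_bigr do rewrite sum_e1.
under eq_bigr do rewrite sum_e2.
rewrite sumr_const card_ord -[X in X = _]mulr_natr -[X in _ * (_ + X)]mulr_natr.
rewrite !natrM natrD; ring.
Qed.

Lemma nat_fact m n : (minn m n * (m + n) <= 2 * (m * n))%N.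
Proof. nia. Qed.

Lemma final_generic (R : realType) (F : nzRingType) (abs2 : F -> R)
  (iota : {rmorphism R -> F})
  (h0 : forall x, 0 <= abs2 x) (hi : forall r, abs2 (iota r) = r ^+ 2)
  (hadd : forall a b, abs2 (a + b) <= 2 * abs2 a + 2 * abs2 b)
  (hmul : forall a b, abs2 (a * b) = abs2 a * abs2 b)
  (htr : forall p q (X : 'M[R]_(p, q)), (forall v, nrm2 (X *m v) <= nrm2 v) ->
     forall z : 'cV[F]_q, \sum_i abs2 ((map_mx iota X *m z) i 0) <= \sum_j abs2 (z j 0))
  m n :
  (1 / 8) * Num.sqrt ((minn m n)%:R / 2) - 1 <=
    expect_half (fun M : 'M[bool]_(m, n) => schur_norm abs2 M).
Proof.
have FL := F_lower h0 hi hadd hmul htr.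
set N : R := (2 ^ (m * n))%:R.
have N0 : 0 < N by rewrite /N ltr0n expn_gt0.
have hN : \sum_(M : 'M[bool]_(m, n)) (1 : R) = N.
  by rewrite sumr_const card_mx card_bool.
rewrite /expect_half -/N ler_pdivlMr //.
have sge0 : forall M : 'M[bool]_(m, n), 0 <= schur_norm abs2 M.
  have z0 : forall p, nrm2 (0 : 'cV[R]_p) = 0.
    by move=> p; rewrite /nrm2 big1 // => i _; rewrite mxE expr0n.
  move=> M; have := FL m n M 0 0; rewrite mulmx0 (z0 m) sqrtr0; apply.
    by move=> v; rewrite mul0mx z0 nrm2_ge0.
  by rewrite z0 ler01.
case: (posnP m) => [m0|hm].
  have -> : minn m n = 0%N by rewrite m0 min0n.
  rewrite mul0r sqrtr0 mulr0 sub0r.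
  apply: (@le_trans _ _ 0); first by rewrite mulNr oppr_le0 mul1r ltW.
  by apply: sumr_ge0 => M _; exact: sge0.
case: (posnP n) => [n0|hn].
  have -> : minn m n = 0%N by rewrite n0 minn0.
  rewrite mul0r sqrtr0 mulr0 sub0r.
  apply: (@le_trans _ _ 0); first by rewrite mulNr oppr_le0 mul1r ltW.
  by apply: sumr_ge0 => M _; exact: sge0.
pose t := Num.sqrt ((m + n)%:R : R); pose mu := Num.sqrt (m%:R : R) * Num.sqrt (n%:R : R).
have t0 : 0 < t by rewrite /t sqrtr_gt0 ltr0n addn_gt0 hm.
have t2 : t ^+ 2 = (m + n)%:R by rewrite /t sqr_sqrtr.
have sm0 : 0 < Num.sqrt (m%:R : R) by rewrite sqrtr_gt0 ltr0n.
have sn0 : 0 < Num.sqrt (n%:R : R) by rewrite sqrtr_gt0 ltr0n.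
have mu0 : 0 < mu by rewrite /mu mulr_gt0.
have mu2 : mu ^+ 2 = (m * n)%:R by rewrite /mu exprMn !sqr_sqrtr // natrM.
have hg : forall M : 'M[bool]_(m, n),
    mu / (2 * t) - TT R M / (8 * t ^+ 3 * mu) - 1 / 2 <= schur_norm abs2 M.
  move=> M; have [X' [u [h1 h2 h3]]] := real_main M hm hn (erefl t) (erefl mu).
  have := FL _ _ M X' u h1 h2; lra.
have hs : \sum_(M : 'M[bool]_(m, n)) (mu / (2 * t) - TT R M / (8 * t ^+ 3 * mu) - 1 / 2)
   <= \sum_(M : 'M[bool]_(m, n)) schur_norm abs2 M.
  by apply: ler_sum => M _; exact: hg.
set b := 8 * t ^+ 3 * mu.
have b0 : 0 < b by rewrite /b !mulr_gt0 // exprn_gt0.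
have eg : \sum_(M : 'M[bool]_(m, n)) (mu / (2 * t) - TT R M / b - 1 / 2)
    = (mu / (2 * t) - 1 / 2) * N - (\sum_(M : 'M[bool]_(m, n)) TT R M) / b.
  rewrite !sumrB !sumr_const card_mx card_bool -mulr_suml -/N.
  rewrite -(mulr_natr (mu / (2 * t))) -(mulr_natr (1 / 2)) -/N; ring.
rewrite -/b eg in hs.
have hT := sum_TT R m n; rewrite -/N in hT.
have eP : (m * n * (m + n))%:R = mu ^+ 2 * t ^+ 2 :> R by rewrite natrM mu2 t2.
rewrite eP in hT.
have hTb : (\sum_(M : 'M[bool]_(m, n)) TT R M) / b <= N * (mu / (8 * t)).
  rewrite ler_pdivrMr //.
  have -> : N * (mu / (8 * t)) * b = N * (mu ^+ 2 * t ^+ 2).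
    by rewrite /b; field; rewrite gt_eqF.
  exact: hT.
have ek : (mu / (2 * t) - 1 / 2) * N - N * (mu / (8 * t)) = N * (3 / 8 * (mu / t) - 1 / 2).
  by field; rewrite gt_eqF.
have key : N * (3 / 8 * (mu / t) - 1 / 2) <= \sum_(M : 'M[bool]_(m, n)) schur_norm abs2 M.
  lra.
have hk : Num.sqrt ((minn m n)%:R / 2) <= mu / t.
  have -> : mu / t = Num.sqrt ((mu / t) ^+ 2).
    by rewrite sqrtr_sqr ger0_norm // divr_ge0 // ltW.
  rewrite ler_sqrt ?sqr_ge0 // expr_div_n mu2 t2.
  have hnat : ((minn m n * (m + n))%:R : R) <= (2 * (m * n))%:R by rewrite ler_nat nat_fact.
  rewrite !natrM in hnat.
  have q0 : (0 : R) < (m + n)%:R by rewrite ltr0n addn_gt0 hm.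
  have -> : (m * n)%:R / (m + n)%:R =
      (minn m n)%:R / 2 + (2 * (m%:R * n%:R) - (minn m n)%:R * (m + n)%:R) / (2 * (m + n)%:R) :> R.
    by rewrite natrM; field; rewrite -natrD gt_eqF.
  rewrite lerDl divr_ge0 //; first by lra.
  by rewrite mulr_ge0 // ltW.
have mt0 : 0 <= mu / t by rewrite divr_ge0 // ltW.
have hfin : (1 / 8 * Num.sqrt ((minn m n)%:R / 2) - 1) * N <= (3 / 8 * (mu / t) - 1 / 2) * N.
  by rewrite ler_pM2r //; lra.
lra.
Qed.

Unset Implicit Arguments.

Lemma ReD (R : realType) (a b : R[i]) : complex.Re (a + b) = complex.Re a + complex.Re b.
Proof. by case: a => a1 a2; case: b => b1 b2. Qed.
Lemma ImD (R : realType) (a b : R[i]) : complex.Im (a + b) = complex.Im a + complex.Im b.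
Proof. by case: a => a1 a2; case: b => b1 b2. Qed.
Lemma ReM (R : realType) (a b : R[i]) : complex.Re (a * b) = complex.Re a * complex.Re b - complex.Im a * complex.Im b.
Proof. by case: a => a1 a2; case: b => b1 b2. Qed.
Lemma ImM (R : realType) (a b : R[i]) : complex.Im (a * b) = complex.Re a * complex.Im b + complex.Im a * complex.Re b.
Proof. by case: a => a1 a2; case: b => b1 b2. Qed.
Lemma Re0 (R : realType) : complex.Re (0 : R[i]) = 0. Proof. by []. Qed.
Lemma Im0 (R : realType) : complex.Im (0 : R[i]) = 0. Proof. by []. Qed.

Definition iotaC (R : realType) : {rmorphism R -> R[i]} := real_complex R.
Definition iotaR (R : realType) : {rmorphism R -> R} := idfun.

Lemma ReC (R : realType) (r : R) : complex.Re (iotaC R r) = r. Proof. by []. Qed.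
Lemma ImC (R : realType) (r : R) : complex.Im (iotaC R r) = 0. Proof. by []. Qed.

Lemma finalR (R : realType) m n :
  (1 / 8) * Num.sqrt ((minn m n)%:R / 2) - 1 <= expect_half (@schur_normR R m n).
Proof.
apply: (@final_generic R R (@abs2R R) (iotaR R)).
- by move=> x; rewrite /abs2R sqr_ge0.
- by [].
- move=> a b; rewrite /abs2R; have := sqr_ge0 (a - b); nra.
- by move=> a b; rewrite /abs2R exprMn.
- move=> p q X hX z.
  have -> : map_mx (iotaR R) X = X by apply/matrixP => i j; rewrite mxE.
  exact: hX z.
Qed.

Lemma finalC (R : realType) m n :
  (1 / 8) * Num.sqrt ((minn m n)%:R / 2) - 1 <= expect_half (@schur_normC R m n).
Proof.
apply: (@final_generic R (R[i]) (@abs2C R) (iotaC R)).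
- by move=> x; rewrite /abs2C addr_ge0 ?sqr_ge0.
- by move=> r; rewrite /abs2C ReC ImC expr0n addr0.
- move=> a b; rewrite /abs2C ReD ImD.
  have := sqr_ge0 (complex.Re a - complex.Re b);
  have := sqr_ge0 (complex.Im a - complex.Im b); nra.
- by move=> a b; rewrite /abs2C ReM ImM; ring.
- move=> p q X hX z.
  set zr : 'cV[R]_q := map_mx (@complex.Re R) z.
  set zi : 'cV[R]_q := map_mx (@complex.Im R) z.
  have eR : forall i, complex.Re ((map_mx (iotaC R) X *m z) i 0) = (X *m zr) i 0.
    move=> i; rewrite !mxE (big_morph _ (@ReD R) (Re0 R)); apply: eq_bigr => j _.
    by rewrite !mxE ReM ReC ImC; ring.
  have eI : forall i, complex.Im ((map_mx (iotaC R) X *m z) i 0) = (X *m zi) i 0.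
    move=> i; rewrite !mxE (big_morph _ (@ImD R) (Im0 R)); apply: eq_bigr => j _.
    by rewrite !mxE ImM ReC ImC; ring.
  have e1 : \sum_i abs2C ((map_mx (iotaC R) X *m z) i 0) = nrm2 (X *m zr) + nrm2 (X *m zi).
    by rewrite /nrm2 -big_split; apply: eq_bigr => i _; rewrite /abs2C eR eI.
  have e2 : \sum_j abs2C (z j 0) = nrm2 zr + nrm2 zi.
    by rewrite /nrm2 -big_split; apply: eq_bigr => j _; rewrite /abs2C !mxE.
  rewrite e1 e2; have := hX zr; have := hX zi; lra.
Qed.

Theorem proposition8p4 (R : realType) (m n : nat) :
  let k := minn m n in
  (1 / 8) * Num.sqrt (k%:R / 2) - 1 <= expect_half (@schur_normR R m n) /\
  (1 / 8) * Num.sqrt (k%:R / 2) - 1 <= expect_half (@schur_normC R m n).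
Proof. by move=> k; split; [exact: finalR | exact: finalC]. Qed.
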